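(* Assume Assumption A. Let $\mathscr C$ be a communicating (equivalence) class of the limiting chain $X_R$. Then for all $\eta\ne\xi\in\mathscr C$ there exists $m(\eta,\xi)\in(0,\infty)$ with $\lim_{N\to\infty}\mu_N(\eta)/\mu_N(\xi)=m(\eta,\xi)$.
   Context: Setting: $E$ is a fixed finite set; for each $N\ge1$, $(\eta^N_t)$ is a continuous-time irreducible Markov chain on $E$ with jump rates $R_N(\eta,\xi)$ and unique invariant probability measure $\mu_N$. Ordered families: a finite family of sequences of positive reals $(a^r_N)_{N\ge1}$, $r\in\mathfrak R$, is ordered if for all $r\neq s$ the sequence $\arctan(a^r_N/a^s_N)$ converges as $N\to\infty$. Assumption A: (i) for each $\eta\neq\xi$, either $R_N(\eta,\xi)=0$ for all $N$ or $R_N(\eta,\xi)>0$ for all $N$; let $\mathbb B=\{(\eta,\xi):\eta\ne\xi,R_N(\eta,\xi)>0\}$. (ii) For every $m\ge1$ the family $\prod_{(\eta,\xi)\in\mathbb B}R_N(\eta,\xi)^{k(\eta,\xi)}$, indexed by $k:\mathbb B\to\mathbb Z_+$ with $\sum k=m$, is ordered. Limiting chain: $\alpha_N^{-1}=\sum_\eta\sum_{\xi\ne\eta}R_N(\eta,\xi)$; under Assumption A, $R(\eta,\xi)=\lim_N\alpha_NR_N(\eta,\xi)\in[0,1]$ exists; $X_R$ is the Markov chain on $E$ with rates $R(\eta,\xi)$ (possibly reducible). Two states are in the same communicating class if each can be reached from the other along a path of positive $R$-rates. *)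

(* Defs.v *)
From mathcomp Require Import all_boot.
From Stdlib Require Import Reals Relations.
Set Implicit Arguments.
Unset Strict Implicit.
Unset Printing Implicit Defensive.
Open Scope R_scope.

(* A rate matrix on E: only off-diagonal entries are meaningful. *)
Definition rates (E : finType) := E -> E -> R.

Definition pos_jump (E : finType) (Q : rates E) : relation E :=
  fun x y => x <> y /\ 0 < Q x y.

Definition reaches (E : finType) (Q : rates E) (x y : E) : Prop :=
  clos_refl_trans E (pos_jump Q) x y.

Definition irreducible (E : finType) (Q : rates E) : Prop :=
  forall x y : E, reaches Q x y.

Definition communicate (E : finType) (Q : rates E) (x y : E) : Prop :=
  reaches Q x y /\ reaches Q y x.

Definition invariant_prob (E : finType) (Q : rates E) (mu : E -> R) : Prop :=
  (forall x, 0 <= mu x) /\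
  \big[Rplus/0]_(x : E) mu x = 1 /\
  (forall y : E,
     \big[Rplus/0]_(x : E | x != y) (mu x * Q x y)
     = mu y * \big[Rplus/0]_(z : E | z != y) Q y z).

Definition ordered (I : Type) (a : I -> nat -> R) : Prop :=
  (forall r N, 0 < a r N) /\
  forall r s : I, r <> s -> exists l, Un_cv (fun N => atan (a r N / a s N)) l.

Definition inB (E : finType) (RN : nat -> rates E) (p : E * E) : Prop :=
  p.1 <> p.2 /\ forall N, 0 < RN N p.1 p.2.

(* exponent vectors k : B -> Z_+ with |k| = m (k is extended by 0 off B) *)
Definition exponent (E : finType) (RN : nat -> rates E) (m : nat) : Type :=
  { k : E * E -> nat |
      (forall p, ~ inB RN p -> k p = 0%nat) /\
      (\sum_(p : E * E | p.1 != p.2) k p)%N = m }.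

Definition monomial (E : finType) (RN : nat -> rates E) (m : nat)
  (k : exponent RN m) (N : nat) : R :=
  \big[Rmult/1]_(p : E * E | p.1 != p.2) (RN N p.1 p.2 ^ (proj1_sig k p)).

Definition assumptionA (E : finType) (RN : nat -> rates E) : Prop :=
  (forall x y : E, x <> y ->
     (forall N, RN N x y = 0) \/ (forall N, 0 < RN N x y)) /\
  (forall m : nat, (1 <= m)%nat -> ordered (@monomial E RN m)).

(* alpha_N^{-1} = total off-diagonal rate *)
Definition total_rate (E : finType) (Q : rates E) : R :=
  \big[Rplus/0]_(p : E * E | p.1 != p.2) Q p.1 p.2.

Definition limiting_rates (E : finType) (RN : nat -> rates E) (Rlim : rates E) : Prop :=
  forall x y : E, x <> y ->
    Un_cv (fun N => RN N x y / total_rate (RN N)) (Rlim x y).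

(* Main.v *)
Require Import Defs.
From HB Require Import structures.
From Stdlib Require Import Reals Relations Lra Lia ClassicalEpsilon Classical.
From mathcomp Require Import all_boot.
Set Implicit Arguments.
Unset Strict Implicit.
Unset Printing Implicit Defensive.
Open Scope R_scope.

Lemma RplusA : associative Rplus. Proof. by move=> x y z; rewrite Rplus_assoc. Qed.
Lemma RmultA : associative Rmult. Proof. by move=> x y z; rewrite Rmult_assoc. Qed.
HB.instance Definition _ := Monoid.isComLaw.Build R 0 Rplus RplusA Rplus_comm Rplus_0_l.
HB.instance Definition _ := Monoid.isComLaw.Build R 1 Rmult RmultA Rmult_comm Rmult_1_l.
HB.instance Definition _ := Monoid.isMulLaw.Build R 0 Rmult Rmult_0_l Rmult_0_r.
HB.instance Definition _ := Monoid.isAddLaw.Build R Rmult Rplus Rmult_plus_distr_r Rmult_plus_distr_l.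

Lemma sum_ge0 (I : Type) (r : seq I) (P : pred I) (F : I -> R) :
  (forall i, P i -> 0 <= F i) -> 0 <= \big[Rplus/0]_(i <- r | P i) F i.
Proof.
move=> H; apply: (big_ind (fun x => 0 <= x)) => //; first lra.
by move=> x y; lra.
Qed.

Lemma prod_gt0 (I : Type) (r : seq I) (P : pred I) (F : I -> R) :
  (forall i, P i -> 0 < F i) -> 0 < \big[Rmult/1]_(i <- r | P i) F i.
Proof.
move=> H; apply: (big_ind (fun x => 0 < x)) => //; first lra.
by move=> x y; apply: Rmult_lt_0_compat.
Qed.

Lemma prod_ge0 (I : Type) (r : seq I) (P : pred I) (F : I -> R) :
  (forall i, P i -> 0 <= F i) -> 0 <= \big[Rmult/1]_(i <- r | P i) F i.
Proof.
move=> H; apply: (big_ind (fun x => 0 <= x)) => //; first lra.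
by move=> x y; apply: Rmult_le_pos.
Qed.

Lemma term_le_sum (I : finType) (P : pred I) (F : I -> R) j :
  (forall i, P i -> 0 <= F i) -> P j -> F j <= \big[Rplus/0]_(i | P i) F i.
Proof.
move=> H Pj; rewrite (bigD1 j) //=.
have : 0 <= \big[Rplus/0]_(i | P i && (i != j)) F i.
  by apply: sum_ge0 => i /andP[]; auto.
lra.
Qed.

Definition cvg (u : nat -> R) := exists l, Un_cv u l.

Lemma cv_const (a : R) : Un_cv (fun _ => a) a.
Proof. move=> e He; exists 0%nat => n _; rewrite /R_dist Rminus_diag Rabs_R0; lra. Qed.

Lemma cv_ext (u v : nat -> R) l : (forall n, u n = v n) -> Un_cv u l -> Un_cv v l.
Proof. move=> E H e He; case: (H e He) => N HN; exists N => n Hn; rewrite -E; auto. Qed.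

Lemma cv_shift (u : nat -> R) l N0 : Un_cv u l -> Un_cv (fun n => u (n + N0)%nat) l.
Proof. move=> H e He; case: (H e He) => N HN; exists N => n /leP Hn; apply: HN; apply/leP; exact: leq_trans Hn (leq_addr _ _). Qed.

Lemma cv_le_ev (u v : nat -> R) a b N0 :
  (forall n, (N0 <= n)%N -> u n <= v n) -> Un_cv u a -> Un_cv v b -> a <= b.
Proof.
move=> H Hu Hv.
apply: (Rle_cv_lim (Un := fun n => u (n + N0)%nat) (Vn := fun n => v (n + N0)%nat)).
- by move=> n; apply: H; rewrite leq_addl.
- exact: cv_shift.
- exact: cv_shift.
Qed.

Lemma cv_sum (I : Type) (r : seq I) (P : pred I) (F : I -> nat -> R) (l : I -> R) :
  (forall i, P i -> Un_cv (F i) (l i)) ->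
  Un_cv (fun N => \big[Rplus/0]_(i <- r | P i) F i N) (\big[Rplus/0]_(i <- r | P i) l i).
Proof.
move=> H; elim: r => [|x r IH].
  by apply: (cv_ext (u := fun _ => 0)) => [n|]; rewrite ?big_nil //; apply: cv_const.
rewrite big_cons; case Px: (P x).
  apply: (cv_ext (u := fun N => F x N + \big[Rplus/0]_(i <- r | P i) F i N)).
    by move=> n; rewrite big_cons Px.
  by apply: CV_plus; auto.
by apply: (cv_ext _ IH) => n; rewrite big_cons Px.
Qed.

Lemma cv_inv (u : nat -> R) l : l <> 0 -> Un_cv u l -> Un_cv (fun n => / u n) (/ l).
Proof.
move=> Hl H.
have C : continuity_pt (/ id) l.
  apply: continuity_pt_inv => //; apply: derivable_continuous_pt; apply: derivable_pt_id.
exact: (continuity_seq _ _ _ C H).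
Qed.

Lemma list_max (T : eqType) (le : T -> T -> Prop) (s : seq T) :
  (forall x y, x \in s -> y \in s -> le x y \/ le y x) ->
  (forall x y z, x \in s -> y \in s -> z \in s -> le x y -> le y z -> le x z) ->
  (forall x, x \in s -> le x x) ->
  s <> [::] -> exists2 m, m \in s & forall x, x \in s -> le x m.
Proof.
elim: s => [|a s IH] // Htot Htr Hrefl _.
case: s IH Htot Htr Hrefl => [|b s] IH Htot Htr Hrefl.
  by exists a; rewrite ?inE // => x; rewrite inE => /eqP ->; apply: Hrefl; rewrite inE.
have sub : forall x, x \in b :: s -> x \in a :: b :: s by move=> x xs; rewrite inE xs orbT.
case: IH => //.
- by move=> x y /sub Hx /sub Hy; apply: Htot.
- by move=> x y z /sub Hx /sub Hy /sub Hz; apply: Htr.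
- by move=> x /sub; apply: Hrefl.
move=> m ms Hm.
have ain : a \in a :: b :: s by rewrite inE eqxx.
case: (Htot a m ain (sub _ ms)) => Ham.
- exists m; first exact: sub.
  move=> x; rewrite inE => /orP[/eqP -> //|xs]; exact: Hm.
- exists a => // x; rewrite inE => /orP[/eqP -> |xs]; first exact: Hrefl.
  by apply: (Htr x m a (sub _ xs) (sub _ ms) ain) => //; apply: Hm.
Qed.

Lemma ratio_cv (I : finType) (g : I -> nat -> R) (PA PB : pred I) (c C : R) (N0 : nat) :
  (forall i, PA i || PB i -> forall N, 0 < g i N) ->
  (forall i j, PA i || PB i -> PA j || PB j ->
     cvg (fun N => g i N / g j N) \/ cvg (fun N => g j N / g i N)) ->
  (exists i, PB i) -> 0 < c ->
  (forall N, (N0 <= N)%N ->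
     c * \big[Rplus/0]_(i | PB i) g i N <= \big[Rplus/0]_(i | PA i) g i N /\
     \big[Rplus/0]_(i | PA i) g i N <= C * \big[Rplus/0]_(i | PB i) g i N) ->
  exists m, 0 < m /\
    Un_cv (fun N => \big[Rplus/0]_(i | PA i) g i N / \big[Rplus/0]_(i | PB i) g i N) m.
Proof.
move=> gpos Hcmp [i0 Bi0] cpos Hbd.
pose U := [pred i | PA i || PB i].
pose le i j := cvg (fun N => g i N / g j N).
have [m mU mmax] : exists2 m, m \in enum U & forall x, x \in enum U -> le x m.
  apply: list_max.
  - by move=> x y; rewrite !mem_enum => Hx Hy; apply: Hcmp.
  - move=> x y z; rewrite !mem_enum => Hx Hy Hz [l1 H1] [l2 H2]; exists (l1 * l2).
    apply: (cv_ext _ (CV_mult _ _ _ _ H1 H2)) => n.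
    have := gpos _ Hy n; rewrite /Rdiv => hy; field; split; apply: Rgt_not_eq.
      exact: gpos. lra.
  - move=> x; rewrite mem_enum => Hx; exists 1; apply: (cv_ext _ (cv_const 1)) => n.
    by rewrite /Rdiv Rinv_r //; apply: Rgt_not_eq; apply: gpos.
  - move=> E; have H0 : i0 \in enum U by rewrite mem_enum inE Bi0 orbT.
    by rewrite E in H0.
rewrite mem_enum in mU.
have Hl : forall i, exists l, U i -> Un_cv (fun N => g i N / g m N) l.
  move=> i; case: (boolP (U i)) => Ui.
    by case: (mmax i); rewrite ?mem_enum // => l Hl; exists l.
  by exists 0.
pose l i := proj1_sig (constructive_indefinite_description _ (Hl i)).
have lP : forall i, U i -> Un_cv (fun N => g i N / g m N) (l i).
  by move=> i; rewrite /l; case: (constructive_indefinite_description _ _).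
have lge0 : forall i, U i -> 0 <= l i.
  move=> i Ui; apply: (Rle_cv_lim (Un := fun _ => 0)) (cv_const 0) (lP i Ui) => n.
  by apply: Rlt_le; apply: Rdiv_lt_0_compat; apply: gpos.
have lm1 : l m = 1.
  apply: (UL_sequence _ _ _ (lP m mU)); apply: (cv_ext _ (cv_const 1)) => n.
  by rewrite /Rdiv Rinv_r //; apply: Rgt_not_eq; apply: gpos.
have gm0 : forall N, g m N <> 0 by move=> N; apply: Rgt_not_eq; apply: gpos.
pose SA N := \big[Rplus/0]_(i | PA i) (g i N / g m N).
pose SB N := \big[Rplus/0]_(i | PB i) (g i N / g m N).
have SAE : forall N, SA N = \big[Rplus/0]_(i | PA i) g i N / g m N.
  by move=> N; rewrite /SA /Rdiv big_distrl.
have SBE : forall N, SB N = \big[Rplus/0]_(i | PB i) g i N / g m N.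
  by move=> N; rewrite /SB /Rdiv big_distrl.
pose P := \big[Rplus/0]_(i | PA i) l i.
pose Q := \big[Rplus/0]_(i | PB i) l i.
have cA : Un_cv SA P.
  by apply: cv_sum => i Ai; apply: lP; rewrite /U /= Ai.
have cB : Un_cv SB Q.
  by apply: cv_sum => i Bi; apply: lP; rewrite /U /= Bi orbT.
have gmpos : forall N, 0 < / g m N by move=> N; apply: Rinv_0_lt_compat; apply: gpos.
have PCQ : P <= C * Q.
  apply: (cv_le_ev (N0 := N0) (u := SA) (v := fun N => C * SB N)) => //.
    move=> n Hn; rewrite SAE SBE /Rdiv -Rmult_assoc.
    apply: Rmult_le_compat_r; [apply: Rlt_le; apply: gmpos|].
    by case: (Hbd n Hn).
  by apply: (CV_mult (fun _ => C) SB); [apply: cv_const|].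
have cQP : c * Q <= P.
  apply: (cv_le_ev (N0 := N0) (u := fun N => c * SB N) (v := SA)) => //.
    move=> n Hn; rewrite SAE SBE /Rdiv -Rmult_assoc.
    apply: Rmult_le_compat_r; [apply: Rlt_le; apply: gmpos|].
    by case: (Hbd n Hn).
  by apply: (CV_mult (fun _ => c) SB); [apply: cv_const|].
have Pge0 : 0 <= P by apply: sum_ge0 => i Ai; apply: lge0; rewrite /U /= Ai.
have Qge0 : 0 <= Q by apply: sum_ge0 => i Bi; apply: lge0; rewrite /U /= Bi orbT.
have PQ1 : 1 <= P + Q.
  move: mU; rewrite /U /= => /orP[Am|Bm].
    have : l m <= P by apply: term_le_sum => // i Ai; apply: lge0; rewrite /U /= Ai.
    lra.
  have : l m <= Q by apply: term_le_sum => // i Bi; apply: lge0; rewrite /U /= Bi orbT.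
  lra.
have Qpos : 0 < Q.
  case: (Rle_lt_dec Q 0) => // HQ.
  have HQ0 : Q = 0 by lra.
  rewrite HQ0 Rmult_0_r in PCQ; lra.
exists (P / Q); split.
  apply: Rdiv_lt_0_compat => //; nra.
apply: (cv_ext (u := fun N => SA N * / SB N)).
  move=> n; rewrite SAE SBE /Rdiv Rinv_mult Rinv_inv; field; split => //.
  apply: Rgt_not_eq.
  apply: (Rlt_le_trans _ (g i0 n)); first by apply: gpos; rewrite Bi0 orbT.
  by apply: term_le_sum => // i Bi; apply: Rlt_le; apply: gpos; rewrite Bi orbT.
by apply: CV_mult => //; apply: cv_inv => //; lra.
Qed.

Definition upd (E : finType) (f : {ffun E -> E}) (a b : E) : {ffun E -> E} :=
  [ffun v => if v == a then b else f v].

Definition treeb (E : finType) (r : E) (f : {ffun E -> E}) : bool :=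
  [&& f r == r, [forall v, (v != r) ==> (f v != v)] & [forall v, fconnect f v r]].

Lemma reachP (E : finType) (f : E -> E) x y : fconnect f x y <-> exists n, iter n f x = y.
Proof.
split; first by move=> H; exists (findex f x y); apply: iter_findex.
by case=> n <-; apply: fconnect_iter.
Qed.

Lemma iter_agree (E : finType) (f1 f2 : E -> E) r :
  (forall w, w != r -> f1 w = f2 w) -> forall n v, iter n f1 v = r -> exists m, iter m f2 v = r.
Proof.
move=> Ag; elim=> [|n IH] v; first by move=> <-; exists 0%N.
rewrite iterSr; case: (eqVneq v r) => [-> _|vr]; first by exists 0%N.
rewrite Ag // => /IH [m Hm]; exists m.+1; by rewrite iterSr.
Qed.

Lemma upd_ne (E : finType) (g : {ffun E -> E}) a b v : v != a -> upd g a b v = g v.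
Proof. by rewrite ffunE => /negbTE ->. Qed.

Lemma upd_eq (E : finType) (g : {ffun E -> E}) a b : upd g a b a = b.
Proof. by rewrite ffunE eqxx. Qed.

Lemma tree_updP (E : finType) (r : E) (g : {ffun E -> E}) :
  treeb r (upd g r r) <->
  (forall v, v != r -> g v != v) /\ (forall v, exists n, iter n g v = r).
Proof.
split.
  case/and3P=> _ /forallP H1 /forallP H2; split.
    by move=> v vr; move: (H1 v); rewrite vr upd_ne.
  move=> v; case/reachP: (H2 v) => n Hn.
  by apply: (iter_agree _ Hn) => w wr; rewrite upd_ne.
case=> H1 H2; apply/and3P; split.
- by rewrite upd_eq.
- by apply/forallP => v; apply/implyP => vr; rewrite upd_ne //; apply: H1.
- apply/forallP => v; apply/reachP; case: (H2 v) => n Hn.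
  by apply: (iter_agree _ Hn) => w wr; rewrite upd_ne.
Qed.

Lemma iter_trans (E : Type) (g : E -> E) a b c :
  (exists n, iter n g a = b) -> (exists n, iter n g b = c) -> exists n, iter n g a = c.
Proof. by case=> n1 <- [n2 <-]; exists (n2 + n1)%N; rewrite iterD. Qed.

Lemma K1 (E : finType) (g : {ffun E -> E}) y :
  g y != y -> treeb y (upd g y y) ->
  exists x, [&& x != y, g x == y & treeb x (upd g x x)].
Proof.
move=> gy /tree_updP [H1 H2].
case: (H2 (g y)) => n Hn.
exists (iter n g y).
have gx : g (iter n g y) = y by rewrite -iterS iterSr.
have xy : iter n g y != y by apply: contraNneq gy => E1; rewrite -{1}E1 gx.
rewrite xy gx eqxx /=; apply/tree_updP; split.
  move=> v vx; case: (eqVneq v y) => [->//|vy]; exact: H1.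
move=> v; apply: (iter_trans (H2 v)); by exists n.
Qed.

Lemma K2 (E : finType) (g : {ffun E -> E}) y x :
  x != y -> g x = y -> treeb x (upd g x x) ->
  g y != y /\ treeb y (upd g y y).
Proof.
move=> xy gx /tree_updP [H1 H2].
have gy : g y != y by apply: H1; rewrite eq_sym.
split => //; apply/tree_updP; split.
  move=> v vy; case: (eqVneq v x) => [->|vx]; first by rewrite gx eq_sym.
  exact: H1.
move=> v; apply: (iter_trans (H2 v)); by exists 1%N.
Qed.

Lemma K3 (E : finType) (g : {ffun E -> E}) y x1 x2 :
  g x1 = y -> treeb x1 (upd g x1 x1) ->
  g x2 = y -> treeb x2 (upd g x2 x2) -> x1 = x2.
Proof.
have key : forall x1 x2, g x1 = y -> treeb x1 (upd g x1 x1) ->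
    treeb x2 (upd g x2 x2) ->
    forall (ex1 : exists n, iter n g y == x1) (ex2 : exists n, iter n g y == x2),
    (ex_minn ex1 <= ex_minn ex2)%N -> x1 = x2.
  move=> a b ga _ _ ex1 ex2.
  case: ex_minnP => i /eqP Hi mi; case: ex_minnP => j /eqP Hj mj.
  rewrite leq_eqVlt => /orP[/eqP ij|ij]; first by rewrite -Hi -Hj ij.
  have : iter (j - i.+1) g y == b.
    by rewrite -Hj -{2}(subnK ij) iterD iterS Hi ga.
  move/mj => H.
  have : (j - i.+1 < j)%N by rewrite ltn_subrL /= (leq_ltn_trans (leq0n i) ij).
  by rewrite ltnNge H.
move=> g1 t1 g2 t2.
have ex : forall x, treeb x (upd g x x) -> exists n, iter n g y == x.
  by move=> x /tree_updP [_ H]; case: (H y) => n Hn; exists n; apply/eqP.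
have ex1 := ex _ t1; have ex2 := ex _ t2.
case: (leqP (ex_minn ex1) (ex_minn ex2)) => h.
  exact: (key _ _ g1 t1 t2 ex1 ex2 h).
symmetry; exact: (key _ _ g2 t2 t1 ex2 ex1 (ltnW h)).
Qed.

Definition wt (E : finType) (Q : rates E) (r : E) (f : {ffun E -> E}) : R :=
  \big[Rmult/1]_(v | v != r) Q v (f v).
Definition Wt (E : finType) (Q : rates E) (r : E) : R :=
  \big[Rplus/0]_(f | treeb r f) wt Q r f.
Definition fullw (E : finType) (Q : rates E) (g : {ffun E -> E}) : R :=
  \big[Rmult/1]_(v : E) Q v (g v).

Lemma upd_upd (E : finType) (f : {ffun E -> E}) a b c : upd (upd f a b) a c = upd f a c.
Proof. by apply/ffunP => v; rewrite !ffunE; case: (v == a). Qed.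

Lemma reindex_tree (E : finType) (Q : rates E) r z :
  \big[Rplus/0]_(f | treeb r f) (wt Q r f * Q r z) =
  \big[Rplus/0]_(g | treeb r (upd g r r) && (g r == z)) fullw Q g.
Proof.
symmetry; rewrite (reindex_onto (fun f => upd f r z) (fun g => upd g r r)); last first.
  move=> g /andP[_ /eqP gr]; apply/ffunP => v; rewrite !ffunE.
  by case: (eqVneq v r) => [->|].
apply: eq_big.
  move=> f; rewrite !upd_upd upd_eq eqxx andbT.
  apply/idP/idP.
    by case/andP => t /eqP E1; rewrite E1 in t.
  move=> t; have fr : f r = r by move: t; rewrite /treeb => /and3P[/eqP ? _ _].
  have -> : upd f r r = f by apply/ffunP => v; rewrite ffunE; case: (eqVneq v r) => [->|].
  by rewrite t eqxx.
move=> f _; rewrite /fullw (bigD1 r) //= upd_eq Rmult_comm /wt.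
symmetry.
congr (_ * _); apply: eq_bigr => v vr; by rewrite upd_ne.
Qed.

Lemma tree_balance (E : finType) (Q : rates E) y :
  Wt Q y * \big[Rplus/0]_(z | z != y) Q y z =
  \big[Rplus/0]_(x | x != y) (Wt Q x * Q x y).
Proof.
pose PL (g : {ffun E -> E}) := (g y != y) && treeb y (upd g y y).
have L : Wt Q y * \big[Rplus/0]_(z | z != y) Q y z =
         \big[Rplus/0]_(g | PL g) fullw Q g.
  rewrite big_distrr /=.
  rewrite (partition_big (fun g : {ffun E -> E} => g y) (fun z => z != y)); last first.
    by move=> g /andP[].
  apply: eq_bigr => z zy.
  rewrite /Wt big_distrl /= reindex_tree.
  apply: eq_bigl => g; rewrite /PL.
  case: (eqVneq (g y) z) => [->|]; by rewrite ?zy ?andbT ?andbF.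
rewrite L.
have Rr : \big[Rplus/0]_(x | x != y) (Wt Q x * Q x y) =
    \big[Rplus/0]_(x | x != y) \big[Rplus/0]_(g | treeb x (upd g x x) && (g x == y)) fullw Q g.
  by apply: eq_bigr => x _; rewrite /Wt big_distrl /= reindex_tree.
rewrite Rr.
rewrite [RHS](eq_bigr (fun x => \big[Rplus/0]_(g : {ffun E -> E})
   (if treeb x (upd g x x) && (g x == y) then fullw Q g else 0))); last first.
  by move=> x _; rewrite big_mkcond.
rewrite [RHS]exchange_big /= [LHS]big_mkcond /=.
apply: eq_bigr => g _.
rewrite -big_mkcondr /=.
case: (boolP (PL g)) => Pg.
  case/andP: Pg => gy ty.
  case: (K1 gy ty) => x0 /and3P [x0y /eqP gx0 tx0].
  rewrite (big_pred1 x0) // => x /=.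
  apply/idP/idP.
    case/and3P=> xy tx /eqP gx; apply/eqP; exact: (K3 gx tx gx0 tx0).
  by move/eqP ->; rewrite x0y tx0 gx0 eqxx.
rewrite big_pred0 // => x /=.
apply/negP => /and3P [xy tx /eqP gx].
case: (K2 xy gx tx) => a b; by rewrite /PL a b in Pg.
Qed.

Definition balanced (E : finType) (Q : rates E) (v : E -> R) : Prop :=
  forall y, \big[Rplus/0]_(x | x != y) (v x * Q x y) = v y * \big[Rplus/0]_(z | z != y) Q y z.

Definition offnn (E : finType) (Q : rates E) : Prop := forall x y, x <> y -> 0 <= Q x y.

Lemma zero_prop (E : finType) (Q : rates E) (v : E -> R) :
  offnn Q -> (forall x, 0 <= v x) -> balanced Q v ->
  forall x y, reaches Q x y -> v y = 0 -> v x = 0.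
Proof.
move=> Qnn vnn bal x y; elim=> {x y} [x y [xy Qxy] vy| x _ //| x y z _ IH1 _ IH2 vz].
  have S0 : \big[Rplus/0]_(x | x != y) (v x * Q x y) = 0 by rewrite bal vy Rmult_0_l.
  have : v x * Q x y <= 0.
    rewrite -S0; apply: (term_le_sum (F := fun x => v x * Q x y)).
      move=> i iy; apply: Rmult_le_pos => //; apply: Qnn; exact/eqP.
    exact/eqP.
  have := vnn x; nra.
by apply: IH1; apply: IH2.
Qed.

Lemma mu_pos (E : finType) (Q : rates E) (mu : E -> R) :
  offnn Q -> irreducible Q -> invariant_prob Q mu -> forall x, 0 < mu x.
Proof.
move=> Qnn irr [nn [s1 bal]] x.
case: (Rle_lt_dec (mu x) 0) => // h.
have mx : mu x = 0 by have := nn x; lra.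
have all0 : forall z, mu z = 0.
  by move=> z; apply: (zero_prop Qnn nn bal (irr z x) mx).
have : \big[Rplus/0]_(z : E) mu z = 0 by apply: big1 => z _; apply: all0.
rewrite s1; lra.
Qed.

Lemma unique_inv (E : finType) (Q : rates E) (mu W : E -> R) (x1 : E) :
  offnn Q -> irreducible Q -> (forall x, 0 < mu x) -> balanced Q mu ->
  (forall x, 0 <= W x) -> balanced Q W ->
  exists t, forall x, W x = t * mu x.
Proof.
move=> Qnn irr mpos bmu Wnn bW.
case: (@list_max E (fun a b => W a / mu a <= W b / mu b) (enum E)).
- by move=> a b _ _; case: (Rle_lt_dec (W a / mu a) (W b / mu b)) => h; [left|right]; lra.
- by move=> a b c _ _ _; lra.
- by move=> a _; lra.
- move=> E0; have H0 : x1 \in enum E by rewrite mem_enum.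
  by rewrite E0 in H0.
move=> x0 _ Hmax.
pose t := W x0 / mu x0.
have le : forall x, W x <= t * mu x.
  move=> x; have := Hmax x (mem_enum _ _); rewrite /t => h.
  have mx := mpos x.
  have -> : W x = W x / mu x * mu x by field; lra.
  by apply: Rmult_le_compat_r; lra.
pose v x := t * mu x - W x.
have vnn : forall x, 0 <= v x by move=> x; have := le x; rewrite /v; lra.
have bv : balanced Q v.
  move=> y; rewrite /v.
  rewrite (eq_bigr (fun x => t * (mu x * Q x y) + (-1) * (W x * Q x y))); last first.
    by move=> x _; ring.
  rewrite big_split /= -!big_distrr /= bmu bW; ring.
have v0 : v x0 = 0 by rewrite /v /t; have := mpos x0; move=> h; field; lra.
exists t => x; have := zero_prop Qnn vnn bv (irr x x0) v0; rewrite /v; lra.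
Qed.

Definition posb (x : R) : bool := if Rlt_dec 0 x then true else false.
Lemma posbP x : posb x <-> 0 < x.
Proof. by rewrite /posb; case: Rlt_dec. Qed.

Lemma tree_exists (E : finType) (Q : rates E) (r : E) :
  irreducible Q -> exists f, treeb r f /\ forall v, v != r -> 0 < Q v (f v).
Proof.
move=> irr.
pose e x y := (x != y) && posb (Q x y).
pose step (S : {set E}) := S :|: [set x | [exists y, (y \in S) && e x y]].
pose S n := iter n step [set r].
have hex : forall x, exists n, x \in S n.
  have gen : forall a c, clos_refl_trans_1n E (pos_jump Q) a c -> c = r ->
      exists n, a \in S n.
    move=> a0 c0; elim=> [a1 ->|a b c [ab Qab] _ IH cr]; first by exists 0%N; rewrite /S /= inE.
    case: (IH cr) => n Hn.
  exists n.+1; rewrite /S iterS -/(S n) /step !inE; apply/orP; right.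
  apply/existsP; exists b; apply/andP; split => //.
  apply/andP; split; first exact/eqP.
  by rewrite /posb; case: Rlt_dec.
  by move=> x; apply: (gen x r) => //; apply: clos_rt_rt1n; apply: irr.
pose d x := ex_minn (hex x).
have dP : forall x, x != r -> exists y, e x y && (d y < d x)%N.
  move=> x xr; rewrite /d; case: ex_minnP => n xn nmin.
  case: n xn nmin => [|k].
    by rewrite /S /= inE => /eqP xr'; rewrite xr' eqxx in xr.
  rewrite /S iterS -/(S k) /step inE => /orP[xk|]; first by move/(_ k xk); rewrite ltnn.
  rewrite inE => /existsP [y /andP[yk exy]] _.
  exists y; rewrite exy /=; case: ex_minnP => m _ mm; exact: mm.
pose f := [ffun x => if x == r then r else odflt r [pick y | e x y && (d y < d x)%N]].
have fP : forall x, x != r -> e x (f x) && (d (f x) < d x)%N.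
  move=> x xr; rewrite ffunE (negbTE xr).
  case: pickP => [y //|H]; case: (dP x xr) => y; by rewrite H.
exists f; split; last first.
  move=> v vr; case/andP: (fP v vr) => /andP[_ /posbP] //.
apply/and3P; split.
- by rewrite ffunE eqxx.
- apply/forallP => v; apply/implyP => vr; case/andP: (fP v vr) => /andP[vf _] _.
  by rewrite eq_sym.
- apply/forallP => v; apply/reachP.
  have : forall n x, (d x <= n)%N -> exists m, iter m f x = r.
    elim=> [|n IH] x.
      case: (eqVneq x r) => [-> _|xr]; first by exists 0%N.
      by case/andP: (fP x xr) => _ h; rewrite leqn0 => /eqP h0; rewrite h0 in h.
    case: (eqVneq x r) => [-> _|xr]; first by exists 0%N.
    move=> dx; case/andP: (fP x xr) => _ h.
    case: (IH (f x)); first by rewrite -ltnS (leq_trans h dx).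
    by move=> m Hm; exists m.+1; rewrite iterSr.
  by move/(_ (d v) v (leqnn _)).
Qed.

Lemma tan_cv (x : nat -> R) l : - PI / 2 < l < PI / 2 ->
  Un_cv (fun N => atan (x N)) l -> Un_cv x (tan l).
Proof.
move=> hl H.
have C : continuity_pt tan l.
  by apply: derivable_continuous_pt; apply: derivable_pt_tan.
apply: (cv_ext _ (continuity_seq _ _ _ C H)) => n; exact: tan_atan.
Qed.

Lemma atan_cmp (x : nat -> R) l : (forall N, 0 < x N) ->
  Un_cv (fun N => atan (x N)) l -> cvg x \/ cvg (fun N => / x N).
Proof.
move=> xpos H.
have PI0 := PI_RGT_0.
have l0 : 0 <= l.
  apply: (Rle_cv_lim (Un := fun _ => 0)) (cv_const 0) H => n.
  rewrite -atan_0; apply: Rlt_le; apply: atan_increasing; exact: xpos.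
have l1 : l <= PI / 2.
  apply: (Rle_cv_lim (Vn := fun _ => PI / 2)) H (cv_const _) => n.
  by have := atan_bound (x n); lra.
case: (Rle_lt_dec (PI / 2) l) => h.
  right; exists (tan 0); apply: tan_cv; first lra.
  apply: (cv_ext (u := fun N => PI / 2 - atan (x N))).
    by move=> n; rewrite atan_inv.
  have -> : 0 = PI / 2 - l by lra.
  by apply: CV_minus => //; apply: cv_const.
left; exists (tan l); apply: tan_cv => //; lra.
Qed.

Lemma row_le_total (E : finType) (Q : rates E) y :
  offnn Q -> \big[Rplus/0]_(z | z != y) Q y z <= total_rate Q.
Proof.
move=> Qnn; rewrite /total_rate.
rewrite (eq_bigl (fun p : E * E => true && (p.1 != p.2))) //.
rewrite -(pair_big_dep predT (fun a b => a != b) (fun a b => Q a b)) /=.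
rewrite (eq_bigl (fun z => y != z)); last by move=> z; rewrite eq_sym.
apply: (term_le_sum (F := fun a => \big[Rplus/0]_(b | a != b) Q a b)) => // a _.
by apply: sum_ge0 => b ab; apply: Qnn; apply/eqP.
Qed.

Lemma total_ge0 (E : finType) (Q : rates E) : offnn Q -> 0 <= total_rate Q.
Proof. by move=> Qnn; apply: sum_ge0 => p pp; apply: Qnn; apply/eqP. Qed.

Definition evbd (E : finType) (mu : nat -> E -> R) x y :=
  exists K N0, 0 < K /\ forall N, (N0 <= N)%N -> mu N x / mu N y <= K.

Lemma evbd_step (E : finType) (RN : nat -> rates E) (mu : nat -> E -> R) (Rl : rates E) x y :
  (forall N, offnn (RN N)) -> (forall N x, 0 < mu N x) -> (forall N, balanced (RN N) (mu N)) ->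
  limiting_rates RN Rl -> pos_jump Rl x y -> evbd mu x y.
Proof.
move=> Qnn mpos bal Hl [xy rho].
have := Hl x y xy (Rl x y / 2); case; first lra.
move=> N0 HN0; exists (2 / Rl x y), N0; split; first by apply: Rdiv_lt_0_compat; lra.
move=> N /leP HN.
have := HN0 N HN; rewrite /R_dist => hab.
have big : Rl x y / 2 < RN N x y / total_rate (RN N).
  move: hab; case: (Rcase_abs (RN N x y / total_rate (RN N) - Rl x y)) => s.
    rewrite Rabs_left //; lra.
  rewrite Rabs_right //; lra.
set a := RN N x y in big *; set T := total_rate (RN N) in big *.
have T0 : 0 <= T by apply: total_ge0.
have a0 : 0 <= a by apply: Qnn.
have Tpos : 0 < T.
  case: (Rle_lt_dec T 0) => // h; have : T = 0 by lra.
  by move=> h0; rewrite /Rdiv h0 Rinv_0 Rmult_0_r in big; lra.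
have apos : 0 < a.
  have : 0 < a / T by lra.
  move=> h; have -> : a = (a / T) * T by field; lra.
  exact: Rmult_lt_0_compat.
have key : mu N x * a <= mu N y * T.
  have S1 : mu N x * a <= \big[Rplus/0]_(x' | x' != y) (mu N x' * RN N x' y).
    apply: (term_le_sum (F := fun x' => mu N x' * RN N x' y)).
      move=> i iy; apply: Rmult_le_pos; [apply: Rlt_le; apply: mpos|apply: Qnn; exact/eqP].
    exact/eqP.
  rewrite bal in S1.
  apply: (Rle_trans _ _ _ S1); apply: Rmult_le_compat_l; first by apply: Rlt_le.
  exact: row_le_total.
have mx := mpos N x; have my := mpos N y.
have h1 : mu N x / mu N y <= T / a.
  apply: (Rmult_le_reg_r (mu N y * a)); first by apply: Rmult_lt_0_compat.
  have -> : mu N x / mu N y * (mu N y * a) = mu N x * a by field; lra.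
  have -> : T / a * (mu N y * a) = mu N y * T by field; lra.
  exact: key.
have h2 : T / a <= 2 / Rl x y.
  have q : 0 < a / T by lra.
  apply: (Rmult_le_reg_r (a / T * Rl x y)); first by apply: Rmult_lt_0_compat.
  have -> : T / a * (a / T * Rl x y) = Rl x y by field; lra.
  have -> : 2 / Rl x y * (a / T * Rl x y) = 2 * (a / T) by field; lra.
  lra.
lra.
Qed.

Lemma evbd_reach (E : finType) (RN : nat -> rates E) (mu : nat -> E -> R) (Rl : rates E) x y :
  (forall N, offnn (RN N)) -> (forall N x, 0 < mu N x) -> (forall N, balanced (RN N) (mu N)) ->
  limiting_rates RN Rl -> reaches Rl x y -> evbd mu x y.
Proof.
move=> Qnn mpos bal Hl; elim=> {x y} [x y H|x|x y z _ [K1 [N1 [K1p H1]]] _ [K2 [N2 [K2p H2]]]].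
- exact: (evbd_step Qnn mpos bal Hl H).
- exists 1, 0%N; split; first lra.
  by move=> N _; rewrite /Rdiv Rinv_r; [lra|apply: Rgt_not_eq; apply: mpos].
- exists (K1 * K2), (maxn N1 N2); split; first by apply: Rmult_lt_0_compat.
  move=> N; rewrite geq_max => /andP[h1 h2].
  have e : mu N x / mu N z = (mu N x / mu N y) * (mu N y / mu N z).
    have := mpos N y; have := mpos N z; move=> a b; field; lra.
  rewrite e; apply: Rmult_le_compat; try apply: H1; try apply: H2; try done.
  + by apply: Rlt_le; apply: Rdiv_lt_0_compat; apply: mpos.
  + by apply: Rlt_le; apply: Rdiv_lt_0_compat; apply: mpos.
Qed.

Definition goodb (E : finType) (RN : nat -> rates E) (r : E) (f : {ffun E -> E}) : bool :=
  [forall v, (v != r) ==> posb (RN 0%N v (f v))].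

Definition A1 (E : finType) (RN : nat -> rates E) :=
  forall x y : E, x <> y -> (forall N, RN N x y = 0) \/ (forall N, 0 < RN N x y).

Lemma tree_ne (E : finType) (r : E) f v : treeb r f -> v != r -> f v != v.
Proof. by case/and3P=> _ /forallP H _ vr; move: (H v); rewrite vr. Qed.

Lemma good_pos (E : finType) (RN : nat -> rates E) r f : A1 RN ->
  treeb r f -> goodb RN r f -> forall v N, v != r -> 0 < RN N v (f v).
Proof.
move=> HA t /forallP g v N vr.
have fv : v <> f v by apply/eqP; rewrite eq_sym; exact: tree_ne t vr.
have p0 : 0 < RN 0%N v (f v) by apply/posbP; move: (g v); rewrite vr.
case: (HA _ _ fv) => H; last exact: H.
by rewrite H in p0; lra.
Qed.

Lemma bad_zero (E : finType) (RN : nat -> rates E) r f : A1 RN ->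
  treeb r f -> ~~ goodb RN r f -> forall N, wt (RN N) r f = 0.
Proof.
move=> HA t; rewrite /goodb negb_forall => /existsP [v] + N.
rewrite negb_imply => /andP[vr np].
have fv : v <> f v by apply/eqP; rewrite eq_sym; exact: tree_ne t vr.
case: (HA _ _ fv) => H; last first.
  by move: np; have := H 0%N; rewrite /posb; case: Rlt_dec.
by rewrite /wt (bigD1 v) //= H Rmult_0_l.
Qed.

Lemma mk_exp (E : finType) (RN : nat -> rates E) r f : A1 RN ->
  treeb r f -> goodb RN r f ->
  exists k : exponent RN (#|E|).-1, forall N, monomial k N = wt (RN N) r f.
Proof.
move=> HA t g.
pose kf (p : E * E) : nat := ((p.1 != r) && (f p.1 == p.2)).
have H1 : forall p, ~ inB RN p -> kf p = 0%N.
  move=> [a b] /= nB; rewrite /kf /=; case: (boolP (a != r)) => //= ar.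
  case: (eqVneq (f a) b) => // fab; exfalso; apply: nB; split => /=.
    by rewrite -fab; apply/eqP; rewrite eq_sym; exact: tree_ne t ar.
  by move=> N; rewrite -fab; apply: (good_pos HA t g).
have cond : forall p : E * E, (p.1 != r) && (f p.1 == p.2) -> p.1 != p.2.
  by move=> [a b] /= /andP[ar /eqP <-]; rewrite eq_sym; exact: tree_ne t ar.
have H2 : (\sum_(p : E * E | p.1 != p.2) kf p)%N = (#|E|).-1.
  rewrite (eq_bigr (fun p => if (p.1 != r) && (f p.1 == p.2) then 1%N else 0%N)); last first.
    by move=> p _; rewrite /kf; case: ((p.1 != r) && (f p.1 == p.2)).
  rewrite -big_mkcondr /=.
  rewrite (eq_bigl (fun p : E * E => (p.1 != r) && (f p.1 == p.2))); last first.
    move=> p /=; apply/idP/idP; first by case/andP.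
    by move=> h; rewrite h andbT; apply: cond.
  rewrite -(pair_big_dep (fun a => a != r) (fun a b => f a == b) (fun _ _ => 1%N)) /=.
  rewrite (eq_bigr (fun _ => 1%N)); last first.
    move=> a _; rewrite (eq_bigl (fun b => b == f a)); first by rewrite big_pred1_eq.
    by move=> b; rewrite eq_sym.
  by rewrite sum1_card cardC1.
exists (exist _ kf (conj H1 H2)) => N.
rewrite /monomial /= /wt.
rewrite (eq_bigr (fun p => if (p.1 != r) && (f p.1 == p.2) then RN N p.1 p.2 else 1)); last first.
  by move=> p _; rewrite /kf; case: ((p.1 != r) && (f p.1 == p.2)) => /=; rewrite ?Rmult_1_r.
rewrite -(@big_mkcondr R 1 Rmult).
rewrite (eq_bigl (fun p : E * E => (p.1 != r) && (f p.1 == p.2))); last first.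
  move=> p /=; apply/idP/idP; first by case/andP.
  by move=> h; rewrite h andbT; apply: cond.
rewrite -(pair_big_dep (fun a => a != r) (fun a b => f a == b) (fun a b => RN N a b)) /=.
apply: eq_bigr => a _; rewrite (eq_bigl (fun b => b == f a)); first by rewrite big_pred1_eq.
by move=> b; rewrite eq_sym.
Qed.

Theorem mainTheorem13 (E : finType) (RN : nat -> rates E) (mu : nat -> E -> R)
  (Rlim : rates E) :
  (forall N, irreducible (RN N)) ->
  (forall N, invariant_prob (RN N) (mu N)) ->
  assumptionA RN ->
  limiting_rates RN Rlim ->
  forall eta xi : E, eta <> xi -> communicate Rlim eta xi ->
  exists m : R, 0 < m /\ Un_cv (fun N => mu N eta / mu N xi) m.
Proof.
move=> Hirr Hinv [HA1 HA2] Hlim eta xi nexi [c1 c2].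
have Qnn : forall N, offnn (RN N).
  by move=> N x y xy; case: (HA1 x y xy) => H; [rewrite H; lra | apply: Rlt_le].
have mpos : forall N x, 0 < mu N x := fun N => mu_pos (Qnn N) (Hirr N) (Hinv N).
have bal : forall N, balanced (RN N) (mu N) by move=> N; case: (Hinv N) => _ [].
pose W N r := Wt (RN N) r.
have Wnn : forall N r, 0 <= W N r.
  move=> N r; apply: sum_ge0 => f t; apply: prod_ge0 => v vr; apply: Qnn.
  by apply/eqP; rewrite eq_sym; exact: tree_ne t vr.
have Wbal : forall N, balanced (RN N) (W N).
  by move=> N y; rewrite /W tree_balance.
have [f0 [t0 p0]] := tree_exists xi (Hirr 0%N).
have good0 : goodb RN xi f0.
  by apply/forallP => v; apply/implyP => vr; apply/posbP; apply: p0.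
have wt0 : forall N, 0 < wt (RN N) xi f0.
  by move=> N; apply: prod_gt0 => v vr; apply: (good_pos HA1 t0 good0).
have Wxi : forall N, 0 < W N xi.
  move=> N; apply: (Rlt_le_trans _ _ _ (wt0 N)).
  apply: (term_le_sum (F := fun f => wt (RN N) xi f)) => // f t.
  apply: prod_ge0 => v vr; apply: Qnn.
  by apply/eqP; rewrite eq_sym; exact: tree_ne t vr.
have ratio : forall N, mu N eta / mu N xi = W N eta / W N xi.
  move=> N; case: (unique_inv eta (Qnn N) (Hirr N) (mpos N) (bal N) (Wnn N) (Wbal N)) => t Ht.
  have := Wxi N; rewrite !Ht => h.
  have tnz : t <> 0 by move=> t0'; rewrite t0' Rmult_0_l in h; lra.
  have := mpos N xi; have := mpos N eta; move=> a b; field; split; lra.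
pose I := (E * {ffun E -> E})%type.
pose g (i : I) N := wt (RN N) i.1 i.2.
pose P r (i : I) := (i.1 == r) && (treeb i.1 i.2 && goodb RN i.1 i.2).
have Wdec : forall N r, W N r = \big[Rplus/0]_(i : I | P r i) g i N.
  move=> N r; rewrite /P /g.
  rewrite -(pair_big_dep (fun a => a == r) (fun a f => treeb a f && goodb RN a f)
     (fun a f => wt (RN N) a f)) big_pred1_eq.
  rewrite /W /Wt (bigID (goodb RN r)) /=.
  rewrite [X in _ + X = _]big1 ?Rplus_0_r //.
  by move=> f /andP[t ng]; apply: bad_zero.
have Pgood : forall r i, P r i -> treeb i.1 i.2 /\ goodb RN i.1 i.2.
  by move=> r i /andP[_ /andP[]].
have gpos : forall i, P eta i || P xi i -> forall N, 0 < g i N.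
  move=> i /orP[] /Pgood [t gd] N; apply: prod_gt0 => v vr; exact: (good_pos HA1 t gd).
have m1 : (1 <= (#|E|).-1)%N.
  have : (0 < #|predC1 eta|)%N.
    by apply/card_gt0P; exists xi; rewrite inE; apply/eqP => h; apply: nexi.
  by rewrite cardC1.
have Hord := HA2 _ m1.
have Hcmp : forall i j, P eta i || P xi i -> P eta j || P xi j ->
     cvg (fun N => g i N / g j N) \/ cvg (fun N => g j N / g i N).
  move=> i j Hi Hj.
  have [ti gi] : treeb i.1 i.2 /\ goodb RN i.1 i.2 by case/orP: Hi => /Pgood.
  have [tj gj] : treeb j.1 j.2 /\ goodb RN j.1 j.2 by case/orP: Hj => /Pgood.
  have [ki Hki] := mk_exp HA1 ti gi.
  have [kj Hkj] := mk_exp HA1 tj gj.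
  have gip := gpos i Hi; have gjp := gpos j Hj.
  case: (classic (ki = kj)) => hk.
    left; exists 1; apply: (cv_ext _ (cv_const 1)) => n.
    rewrite /g -Hki -Hkj hk /Rdiv Rinv_r //; apply: Rgt_not_eq.
    by rewrite -hk Hki; apply: gip.
  case: (Hord.2 ki kj hk) => l Hl.
  have Hl' : Un_cv (fun N => atan (g i N / g j N)) l.
    by apply: (cv_ext _ Hl) => n; rewrite /g -Hki -Hkj.
  case: (atan_cmp (x := fun N => g i N / g j N) _ Hl') => [n|H|[l' H]].
  - by apply: Rdiv_lt_0_compat.
  - by left.
  - right; exists l'; apply: (cv_ext _ H) => n.
    rewrite /Rdiv Rinv_mult Rinv_inv Rmult_comm //.
have [K1 [N1 [K1p H1]]] := evbd_reach Qnn mpos bal Hlim c1.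
have [K2 [N2 [K2p H2]]] := evbd_reach Qnn mpos bal Hlim c2.
case: (ratio_cv (g := g) (PA := P eta) (PB := P xi) (c := / K2) (C := K1) (N0 := maxn N1 N2)
   gpos Hcmp).
- exists (xi, f0); by rewrite /P /= eqxx t0 good0.
- by apply: Rinv_0_lt_compat.
- move=> N; rewrite geq_max => /andP[h1 h2].
  rewrite -!Wdec.
  have q1 := H1 N h1; have q2 := H2 N h2.
  rewrite ratio in q1.
  have B := Wxi N; have A0 : 0 < W N eta.
    have := ratio N; have := mpos N eta; have := mpos N xi => a b e.
    have : 0 < W N eta / W N xi by rewrite -e; apply: Rdiv_lt_0_compat.
    move=> h; have -> : W N eta = W N eta / W N xi * W N xi by field; lra.
    by apply: Rmult_lt_0_compat.
  have q2' : W N xi / W N eta <= K2.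
    have e : mu N xi / mu N eta = W N xi / W N eta.
      have := ratio N; have := mpos N eta; have := mpos N xi => a b e.
      have -> : mu N xi / mu N eta = / (mu N eta / mu N xi) by field; lra.
      rewrite e; field; lra.
    by rewrite -e.
  split.
    apply: (Rmult_le_reg_l K2) => //; rewrite -Rmult_assoc Rinv_r; last lra.
    rewrite Rmult_1_l.
    have : W N xi = W N xi / W N eta * W N eta by field; lra.
    move=> ->; apply: Rmult_le_compat_r; lra.
  have : W N eta = W N eta / W N xi * W N xi by field; lra.
  move=> ->; apply: Rmult_le_compat_r; lra.
move=> m [mp Hm]; exists m; split => //.
by apply: (cv_ext _ Hm) => n; rewrite ratio !Wdec.
Qed.
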